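(* For any $n$-agent all-pay rank-based mechanism with allocation rule $x$ and any $\delta<1/n$, the equilibrium bid function $b$ satisfies (1) $b(\delta)\le \delta\,e\,x'(\delta)$, and (2) $b(1)-b(1-\delta)\le \delta\,e\,x'(1-\delta)$.
   Context: Agents have values i.i.d. from a continuous distribution $F$ on $[0,1]$; quantile $q=F(v)$ and value function $v(q)=F^{-1}(q)\in[0,1]$. For $k\in\{1,\dots,n-1\}$ the $k$-highest-bids-win allocation rule is $x_k(q)=\sum_{i=0}^{k-1}\binom{n-1}{i}q^{n-1-i}(1-q)^i$; $x_0\equiv0$, $x_n\equiv1$. A rank-based mechanism with position weights $1\ge w_1\ge\cdots\ge w_n\ge 0$ ($w_{n+1}:=0$) has allocation rule $x(q)=\sum_{k=1}^{n}(w_k-w_{k+1})x_k(q)$. In the all-pay format each agent pays his bid; the Bayes–Nash equilibrium bid as a function of quantile is defined by $b(0)=0$ and $b'(q)=v(q)\,x'(q)$. *)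

(* Defs.v *)
From Stdlib Require Import Reals Lra Lia.
Open Scope R_scope.

Definition continuous_dist_on_01 (F : R -> R) : Prop :=
  continuity F /\
  (forall a c, a <= c -> F a <= F c) /\
  (forall a, a <= 0 -> F a = 0) /\
  (forall a, 1 <= a -> F a = 1).

(* v = F^{-1}: for each quantile q in [0,1], v q is the least value
   a in [0,1] with F a >= q  (the infimum is attained since F is continuous). *)
Definition is_value_function (F v : R -> R) : Prop :=
  forall q, 0 <= q <= 1 ->
    (0 <= v q <= 1 /\ q <= F (v q)) /\
    (forall a, 0 <= a <= 1 -> q <= F a -> v q <= a).

(* k-highest-bids-win allocation rule x_k (x_0 = 0);
   x_k(q) = sum_{i=0}^{k-1} C(n-1,i) q^{n-1-i} (1-q)^i
   (for k = n this sum is identically 1, matching x_n = 1). *)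
Definition xk (n k : nat) (q : R) : R :=
  match k with
  | O => 0
  | S k' => sum_f_R0 (fun i => C (n - 1) i * q ^ (n - 1 - i) * (1 - q) ^ i) k'
  end.

Definition wext (n : nat) (w : nat -> R) (k : nat) : R :=
  if Nat.eqb k (S n) then 0 else w k.

Definition valid_weights (n : nat) (w : nat -> R) : Prop :=
  w 1%nat <= 1 /\
  (forall k, (1 <= k)%nat -> (k < n)%nat -> w (S k) <= w k) /\
  0 <= w n.

Definition rank_alloc (n : nat) (w : nat -> R) (q : R) : R :=
  sum_f_R0 (fun j => (wext n w (S j) - wext n w (S (S j))) * xk n (S j) q) (n - 1).

(* all-pay equilibrium bid: b(0)=0, b' = v x', i.e. b(q) = int_0^q v(t) x'(t) dt *)
Definition allpay_bid (v dx b : R -> R) : Prop :=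
  b 0 = 0 /\
  forall q, 0 <= q <= 1 ->
    exists pr : Riemann_integrable (fun t => v t * dx t) 0 q, b q = RiemannInt pr.

(* Main.v *)
Require Import Defs.
From Stdlib Require Import Reals Lra Lia.
From Coquelicot Require Import Coquelicot.
Open Scope R_scope.

Definition Tj (m i : nat) (q : R) := Binomial.C m i * q ^ (m - i) * (1 - q) ^ i.
Definition Aj (m j : nat) (q : R) := Binomial.C m j * INR (m - j) * q ^ pred (m - j) * (1 - q) ^ j.
Definition Bj (m j : nat) (q : R) := Binomial.C m j * INR j * q ^ (m - j) * (1 - q) ^ pred j.

Lemma T_deriv m i q : derivable_pt_lim (Tj m i) q (Aj m i q - Bj m i q).
Proof.
  apply is_derive_Reals. unfold Tj, Aj, Bj. auto_derive; auto. unfold Rminus.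
  generalize (q ^ pred (m-i)) (q^(m-i)) ((1 + -q)^i) ((1 + -q)^pred i). intros. ring.
Qed.

Lemma B_A m i q : (i < m)%nat -> Bj m (S i) q = Aj m i q.
Proof.
  intro H. unfold Bj, Aj. simpl pred. rewrite pascal_step3 by lia.
  replace (m - S i)%nat with (pred (m-i)) by lia.
  assert (INR (S i) <> 0) by (apply not_0_INR; lia).
  generalize (q ^ pred (m-i)) ((1 - q)^i). intros. field. auto.
Qed.

Lemma xk_deriv m q : forall k, (k <= m)%nat ->
  derivable_pt_lim (fun x => sum_f_R0 (fun i => Tj m i x) k) q (Aj m k q).
Proof.
  induction k; intro Hk.
  - simpl. replace (Aj m 0 q) with (Aj m 0 q - Bj m 0 q).
    + apply T_deriv.
    + unfold Bj. simpl INR. ring.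
  - change (fun x => sum_f_R0 (fun i => Tj m i x) (S k)) with
      (plus_fct (fun x => sum_f_R0 (fun i => Tj m i x) k) (Tj m (S k))).
    replace (Aj m (S k) q) with (Aj m k q + (Aj m (S k) q - Bj m (S k) q)).
    + apply derivable_pt_lim_plus. apply IHk; lia. apply T_deriv.
    + rewrite B_A by lia. ring.
Qed.

Lemma sum_deriv (g : nat -> R -> R) (d : nat -> R) q : forall N,
  (forall j, (j <= N)%nat -> derivable_pt_lim (g j) q (d j)) ->
  derivable_pt_lim (fun x => sum_f_R0 (fun j => g j x) N) q (sum_f_R0 d N).
Proof.
  induction N; intro H.
  - simpl. apply H. lia.
  - change (fun x => sum_f_R0 (fun j => g j x) (S N)) with
      (plus_fct (fun x => sum_f_R0 (fun j => g j x) N) (g (S N))).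
    simpl. apply derivable_pt_lim_plus. apply IHN. intros; apply H; lia. apply H; lia.
Qed.

Definition cw (n : nat) (w : nat -> R) (j : nat) := wext n w (S j) - wext n w (S (S j)).
Definition Dx (n : nat) (w : nat -> R) (q : R) :=
  sum_f_R0 (fun j => cw n w j * Aj (n - 1) j q) (n - 1).

Lemma rank_deriv n w q : derivable_pt_lim (rank_alloc n w) q (Dx n w q).
Proof.
  unfold rank_alloc, Dx.
  apply (sum_deriv (fun j x => cw n w j * sum_f_R0 (fun i => Tj (n-1) i x) j)
           (fun j => cw n w j * Aj (n - 1) j q)).
  intros j Hj.
  change (fun x => cw n w j * sum_f_R0 (fun i => Tj (n-1) i x) j) with
    (mult_real_fct (cw n w j) (fun x => sum_f_R0 (fun i => Tj (n-1) i x) j)).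
  apply derivable_pt_lim_scal. apply xk_deriv. lia.
Qed.

Lemma cw_nonneg n w j : valid_weights n w -> (j <= n - 1)%nat -> (1 <= n)%nat -> 0 <= cw n w j.
Proof.
  intros [H1 [H2 H3]] Hj Hn. unfold cw, wext.
  destruct (Nat.eqb_spec (S j) (S n)); [lia|].
  destruct (Nat.eqb_spec (S (S j)) (S n)).
  - assert (S j = n) by lia. subst. lra.
  - assert (w (S (S j)) <= w (S j)) by (apply H2; lia). lra.
Qed.

Lemma C_nonneg m j : 0 <= Binomial.C m j.
Proof.
  unfold Binomial.C, Rdiv. apply Rmult_le_pos. left; apply INR_fact_lt_0.
  left; apply Rinv_0_lt_compat; apply Rmult_lt_0_compat; apply INR_fact_lt_0.
Qed.

Lemma pow_le1 x k : 0 <= x <= 1 -> x ^ k <= 1.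
Proof. intro H. rewrite <- (pow1 k). apply pow_incr. lra. Qed.

Lemma A_nonneg m j t : 0 <= t <= 1 -> 0 <= Aj m j t.
Proof.
  intro H. unfold Aj. pose proof (C_nonneg m j). pose proof (pos_INR (m - j)).
  apply Rmult_le_pos; [apply Rmult_le_pos; [apply Rmult_le_pos|]|]; auto; apply pow_le; lra.
Qed.

Lemma A_bound1 m j t d : 0 <= t <= d -> d <= 1 -> 1 <= exp 1 * (1 - d) ^ j ->
  Aj m j t <= exp 1 * Aj m j d.
Proof.
  intros Ht Hd HE. unfold Aj.
  assert (HK : 0 <= Binomial.C m j * INR (m - j)) by
    (apply Rmult_le_pos; [apply C_nonneg | apply pos_INR]).
  assert (HP : t ^ pred (m - j) <= d ^ pred (m-j)) by (apply pow_incr; lra).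
  assert (HP0 : 0 <= t ^ pred (m - j)) by (apply pow_le; lra).
  assert (HQ : (1 - t) ^ j <= 1) by (apply pow_le1; lra).
  assert (HQ0 : 0 <= (1 - t) ^ j) by (apply pow_le; lra).
  revert HK HP HP0 HQ HQ0 HE.
  generalize (Binomial.C m j * INR (m - j)) (t ^ pred (m - j)) (d ^ pred (m - j))
    ((1 - t) ^ j) ((1 - d) ^ j) (exp 1). intros K P P' Q Q' E. intros.
  assert (P * Q <= P') by nra.
  assert (P' <= P' * (E * Q')) by nra. nra.
Qed.

Lemma A_bound2 m j t d : 1 - d <= t <= 1 -> 0 <= d <= 1 ->
  1 <= exp 1 * (1 - d) ^ pred (m - j) ->
  Aj m j t <= exp 1 * Aj m j (1 - d).
Proof.
  intros Ht Hd HE. unfold Aj. replace (1 - (1 - d)) with d by ring.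
  assert (HK : 0 <= Binomial.C m j * INR (m - j)) by
    (apply Rmult_le_pos; [apply C_nonneg | apply pos_INR]).
  assert (HP : t ^ pred (m - j) <= 1) by (apply pow_le1; lra).
  assert (HP0 : 0 <= t ^ pred (m - j)) by (apply pow_le; lra).
  assert (HQ : (1 - t) ^ j <= d ^ j) by (apply pow_incr; lra).
  assert (HQ0 : 0 <= (1 - t) ^ j) by (apply pow_le; lra).
  revert HK HP HP0 HQ HQ0 HE.
  generalize (Binomial.C m j * INR (m - j)) (t ^ pred (m - j)) ((1 - d) ^ pred (m - j))
    ((1 - t) ^ j) (d ^ j) (exp 1). intros K P P' Q Q' E. intros.
  assert (P * Q <= Q') by nra.
  assert (Q' <= Q' * (E * P')) by nra. nra.
Qed.

Lemma exp_pow_INR y : forall k, exp (INR k * y) = exp y ^ k.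
Proof.
  induction k. simpl. rewrite Rmult_0_l, exp_0. reflexivity.
  rewrite S_INR, Rmult_plus_distr_r, Rmult_1_l, exp_plus, IHk. simpl. ring.
Qed.

Lemma key_ineq n d : (1 <= n)%nat -> 0 < d -> d < 1 / INR n ->
  forall k, (k <= n - 1)%nat -> 1 <= exp 1 * (1 - d) ^ k.
Proof.
  intros Hn Hd Hdn k Hk.
  assert (HnR : 1 <= INR n) by (apply (le_INR 1); lia).
  assert (Hdn' : d * INR n < 1).
  { apply (Rmult_lt_compat_r (INR n)) in Hdn; [|lra].
    unfold Rdiv in Hdn. rewrite Rmult_assoc, Rinv_l in Hdn by lra. lra. }
  assert (Hd1 : d < 1) by nra.
  set (y := d / (1 - d)).
  assert (Hy : exp y * (1 - d) >= 1).
  { pose proof (exp_ineq1_le y).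
    assert ((1 + y) * (1 - d) = 1) by (unfold y; field; lra).
    assert (0 < 1 - d) by lra. nra. }
  assert (H1 : 1 <= (exp y * (1 - d)) ^ (n - 1)) by (apply pow_R1_Rle; lra).
  rewrite Rpow_mult_distr, <- exp_pow_INR in H1.
  assert (Hm : INR (n - 1) * y <= 1).
  { rewrite minus_INR by lia. simpl INR. unfold y.
    apply (Rmult_le_reg_r (1 - d)); [lra|]. unfold Rdiv.
    rewrite Rmult_assoc, Rmult_assoc, Rinv_l by lra. nra. }
  assert (Hexp : exp (INR (n - 1) * y) <= exp 1).
  { destruct (Req_dec (INR (n - 1) * y) 1) as [E|E]. rewrite E; lra.
    left. apply exp_increasing. lra. }
  assert (Hpk : (1 - d) ^ (n - 1) <= (1 - d) ^ k).
  { replace (n - 1)%nat with (k + (n - 1 - k))%nat by lia. rewrite pow_add.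
    assert (0 <= (1 - d) ^ k) by (apply pow_le; lra).
    assert ((1 - d) ^ (n - 1 - k) <= 1) by (apply pow_le1; lra). nra. }
  assert (0 <= (1 - d) ^ (n - 1)) by (apply pow_le; lra).
  assert (0 < exp (INR (n - 1) * y)) by apply exp_pos.
  nra.
Qed.

Lemma sum_nonneg (f : nat -> R) N : (forall j, (j <= N)%nat -> 0 <= f j) -> 0 <= sum_f_R0 f N.
Proof.
  induction N; intro H; simpl. apply H; lia.
  apply Rplus_le_le_0_compat. apply IHN; intros; apply H; lia. apply H; lia.
Qed.

Theorem mainTheorem8 :
  forall (n : nat) (w : nat -> R) (F v : R -> R) (dx b : R -> R) (delta : R),
    (1 <= n)%nat ->
    valid_weights n w ->
    continuous_dist_on_01 F ->
    is_value_function F v ->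
    (forall q, derivable_pt_lim (rank_alloc n w) q (dx q)) ->
    allpay_bid v dx b ->
    0 < delta -> delta < 1 / INR n ->
    b delta <= delta * exp 1 * dx delta /\
    b 1 - b (1 - delta) <= delta * exp 1 * dx (1 - delta).
Proof.
  intros n w F v dx b delta Hn Hw HF Hv Hdx [Hb0 Hb] Hd Hdn.
  assert (Hdxe : forall q, dx q = Dx n w q).
  { intro q. apply (uniqueness_limite (rank_alloc n w) q). apply Hdx. apply rank_deriv. }
  assert (HnR : 1 <= INR n) by (apply (le_INR 1); lia).
  assert (Hd1 : delta <= 1).
  { assert (1 / INR n <= 1). { unfold Rdiv. rewrite Rmult_1_l.
      rewrite <- Rinv_1. apply Rinv_le_contravar; lra. } lra. }
  assert (Hdxpos : forall t, 0 <= t <= 1 -> 0 <= dx t).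
  { intros t Ht. rewrite Hdxe. unfold Dx. apply sum_nonneg. intros j Hj.
    apply Rmult_le_pos. apply cw_nonneg; auto. apply A_nonneg; auto. }
  assert (Hvb : forall t, 0 <= t <= 1 -> 0 <= v t <= 1).
  { intros t Ht. destruct (Hv t Ht) as [[H _] _]. exact H. }
  split.
  - destruct (Hb delta ltac:(lra)) as [pr Hpr]. rewrite Hpr.
    assert (Hbound : forall t, 0 < t < delta -> 0 <= v t * dx t <= exp 1 * dx delta).
    { intros t Ht. assert (dx t <= exp 1 * dx delta).
      { rewrite !Hdxe. unfold Dx. rewrite scal_sum. apply sum_Rle. intros j Hj.
        assert (cw n w j * Aj (n-1) j t <= cw n w j * (exp 1 * Aj (n-1) j delta)).
        { apply Rmult_le_compat_l. apply cw_nonneg; auto.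
          apply A_bound1; try lra. apply (key_ineq n); auto. }
        lra. }
      pose proof (Hvb t ltac:(lra)). pose proof (Hdxpos t ltac:(lra)). split; nra. }
    destruct (RiemannInt_const_bound pr ltac:(lra) Hbound) as [_ H]. lra.
  - destruct (Hb 1 ltac:(lra)) as [pr1 Hpr1].
    destruct (Hb (1 - delta) ltac:(lra)) as [pr2 Hpr2].
    assert (pr3 : Riemann_integrable (fun t => v t * dx t) (1 - delta) 1).
    { apply RiemannInt_P1. apply (RiemannInt_P24 (RiemannInt_P1 pr1) pr2 ). }
    rewrite Hpr1, Hpr2, <- (RiemannInt_P26 pr2 pr3 pr1).
    assert (Hbound : forall t, 1 - delta < t < 1 -> 0 <= v t * dx t <= exp 1 * dx (1 - delta)).
    { intros t Ht. assert (dx t <= exp 1 * dx (1 - delta)).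
      { rewrite !Hdxe. unfold Dx. rewrite scal_sum. apply sum_Rle. intros j Hj.
        assert (cw n w j * Aj (n-1) j t <= cw n w j * (exp 1 * Aj (n-1) j (1 - delta))).
        { apply Rmult_le_compat_l. apply cw_nonneg; auto.
          apply A_bound2; try lra. apply (key_ineq n); auto. lia. }
        lra. }
      pose proof (Hvb t ltac:(lra)). pose proof (Hdxpos t ltac:(lra)). split; nra. }
    destruct (RiemannInt_const_bound pr3 ltac:(lra) Hbound) as [_ H]. lra.
Qed.
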